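(* Let $k_1<k_2$ be integers with $k_1\ge 3$, and let $n$ be a positive integer. If $\nu_{k_1}(n)>0$, then $\nu_{k_2}(n+k_2-k_1)>0$.
   Context: For an integer $k\ge 3$ and a positive integer $n$, $\nu_k(n)$ denotes the number of $k$-tuples of integers $(x_1,\dots,x_k)$ with $1\le x_1\le x_2\le\dots\le x_k$ such that $x_1x_2\cdots x_k+x_1+x_2+\dots+x_k=n$. *)

(* Defs.v *)
From mathcomp Require Import all_boot all_order.
Set Implicit Arguments. Unset Strict Implicit. Unset Printing Implicit Defensive.

Definition is_sol (k n : nat) (s : seq nat) : bool :=
  [&& size s == k, all (fun x => 0 < x) s, sorted leq s &
      (\prod_(x <- s) x) + (\sum_(x <- s) x) == n].

(* nu k n = number of such k-tuples.  Every coordinate of a solution is at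
   most n (x_i <= x_1+...+x_k <= n), so enumerating tuples with entries in
   {0,...,n} counts all of them. *)
Definition nu (k n : nat) : nat :=
  #|[set t : k.-tuple 'I_n.+1 | is_sol k n (map val t)]|.

(* Main.v *)
Require Import Defs.
From mathcomp Require Import all_boot all_order.
From mathcomp Require Import zify.

Lemma pre_prod d (s : seq nat) : \prod_(x <- nseq d 1 ++ s) x = \prod_(x <- s) x.
Proof. by elim: d => [|d IH] //=; rewrite big_cons IH mul1n. Qed.

Lemma pre_sum d (s : seq nat) : \sum_(x <- nseq d 1 ++ s) x = d + \sum_(x <- s) x.
Proof. by elim: d => [|d IH] //=; rewrite big_cons IH addnA add1n. Qed.

Lemma pre_sorted d (s : seq nat) : sorted leq s -> all (fun x => 0 < x) s ->
  sorted leq (nseq d 1 ++ s).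
Proof.
move=> Hs Ha; elim: d => [|d IH] //=.
rewrite (path_sortedE leq_trans) IH andbT all_cat.
apply/andP; split; first by elim: d {IH} => //= d ->.
exact: Ha.
Qed.

Lemma mem_le_sum (s : seq nat) x : x \in s -> x <= \sum_(y <- s) y.
Proof.
elim: s => [|a s IH] //=; rewrite inE big_cons => /orP [/eqP -> | /IH H].
  exact: leq_addr.
by apply: (leq_trans H); apply: leq_addl.
Qed.

Theorem proposition3 (k1 k2 n : nat) :
  3 <= k1 -> k1 < k2 -> 0 < n -> 0 < nu k1 n -> 0 < nu k2 (n + k2 - k1).
Proof.
move=> H3 H12 Hn; rewrite /nu card_gt0 => /set0Pn [t].
rewrite inE /is_sol => /and4P [/eqP Hsz Hall Hsort /eqP Heq].
set s := map val t in Hsz Hall Hsort Heq.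
set d := k2 - k1.
set s' := nseq d 1 ++ s.
set m := n + k2 - k1.
have Hle : forall x, x \in s' -> x <= m.
  move=> x; rewrite mem_cat => /orP [/nseqP [-> _] | Hx].
    rewrite /m; lia.
  have := @mem_le_sum s x Hx; rewrite /m; lia.
have Hsz' : size (map (fun x => @inord m x) s') == k2.
  rewrite size_map size_cat size_nseq Hsz /d; apply/eqP; lia.
rewrite card_gt0; apply/set0Pn; exists (Tuple Hsz'); rewrite inE /=.
have -> : map val (map (fun x => @inord m x) s') = s'.
  rewrite -map_comp -[RHS]map_id; apply/eq_in_map => x Hx /=.
  by rewrite inordK // ltnS Hle.
rewrite /is_sol size_cat size_nseq Hsz all_cat pre_sorted // Hall pre_prod pre_sum.
have -> : all (fun x => 0 < x) (nseq d 1) by elim: (d) => //= ? ->.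
rewrite /= /d /m; apply/andP; split; apply/eqP; lia.
Qed.
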